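(* Let $(\mathcal{S}_1,\mathcal{S}_2)$ be an $S$-pair. Then there is at most one element $s \in S$ such that either $S - s \in \mathcal{S}_2$ or $\{t\} \in \mathcal{S}_2$ for every $t \in S - s$.
   Context: Let $S$ be a finite nonempty set and $\mathcal{S}_1, \mathcal{S}_2 \subseteq 2^S$. The pair $(\mathcal{S}_1,\mathcal{S}_2)$ is an $S$-pair if: (S1) for $i=1,2$, if $A,B \in \mathcal{S}_i$ with $B \subset A$ and $|A| = |B|+1$, then every $|B|$-element subset of $A$ lies in $\mathcal{S}_i$; (S2) for $i=1,2$, if $A,B \in \mathcal{S}_i$ with $|A|=|B|$ and $|A\cap B| = |A|-1$, then $A\cup B \in \mathcal{S}_i$; (S3) for $i=1,2$, not every singleton $\{s\}$, $s\in S$, lies in $\mathcal{S}_i$, and $S \notin \mathcal{S}_i$; (S4) for $k = 1,\dots,|S|-1$ and $x\in S$, if every $k$-element subset of $S - x$ lies in $\mathcal{S}_1$, then not every $(|S|-k)$-element subset of $S-x$ lies in $\mathcal{S}_2$. *)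

(* Defs.v *)
From mathcomp Require Import all_boot.
Set Implicit Arguments. Unset Strict Implicit. Unset Printing Implicit Defensive.

(* The ground set S is the finite type T (assumed nonempty); families of
   subsets of S are elements of {set {set T}}. *)

Definition S1_axiom (T : finType) (F : {set {set T}}) : Prop :=
  forall A B : {set T}, A \in F -> B \in F -> B \proper A -> #|A| = #|B| + 1 ->
    forall C : {set T}, C \subset A -> #|C| = #|B| -> C \in F.

Definition S2_axiom (T : finType) (F : {set {set T}}) : Prop :=
  forall A B : {set T}, A \in F -> B \in F -> #|A| = #|B| ->
    #|A :&: B| + 1 = #|A| -> A :|: B \in F.

Definition S3_axiom (T : finType) (F : {set {set T}}) : Prop :=
  ~ (forall s : T, [set s] \in F) /\ [set: T] \notin F.

Definition S4_axiom (T : finType) (F1 F2 : {set {set T}}) : Prop :=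
  forall (k : nat) (x : T), 1 <= k -> k <= #|T| - 1 ->
    (forall C : {set T}, C \subset [set~ x] -> #|C| = k -> C \in F1) ->
    ~ (forall C : {set T}, C \subset [set~ x] -> #|C| = #|T| - k -> C \in F2).

Definition S_pair (T : finType) (F1 F2 : {set {set T}}) : Prop :=
  [/\ S1_axiom F1 /\ S1_axiom F2,
      S2_axiom F1 /\ S2_axiom F2,
      S3_axiom F1 /\ S3_axiom F2
    & S4_axiom F1 F2].

(* Main.v *)
Require Import Defs.
From mathcomp Require Import all_boot.
From mathcomp Require Import zify.

Lemma grow (T : finType) (F : {set {set T}}) (D : {set T}) :
  S2_axiom F -> (forall t, t \in D -> [set t] \in F) ->
  forall k (C : {set T}), C \subset D -> #|C| = k.+1 -> C \in F.
Proof.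
move=> S2 Hs; elim=> [|k IH] C sub cC.
  have /cards1P [x Cx] : #|C| == 1 by rewrite cC.
  by move: sub; rewrite Cx sub1set => /Hs.
have /card_gt0P [a aC] : 0 < #|C| by rewrite cC.
have ca : #|C :\ a| = k.+1 by move: (cardsD1 a C); rewrite aC cC; lia.
have /card_gt0P [b bCa] : 0 < #|C :\ a| by rewrite ca.
have bC : b \in C by move: bCa; rewrite !inE => /andP[].
have ba : b != a by move: bCa; rewrite !inE => /andP[].
have cb : #|C :\ b| = k.+1 by move: (cardsD1 b C); rewrite bC cC; lia.
have cab : #|(C :\ a) :\ b| = k by move: (cardsD1 b (C :\ a)); rewrite bCa ca; lia.
have EI : (C :\ a) :&: (C :\ b) = (C :\ a) :\ b.
  by apply/setP=> x; rewrite !inE; case: (x == a); case: (x == b); case: (x \in C).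
have EU : (C :\ a) :|: (C :\ b) = C.
  apply/setP=> x; rewrite !inE; case: (eqVneq x a) => [->|xa] /=.
    by rewrite aC eq_sym (negbTE ba).
  by case Hx: (x \in C); rewrite ?andbF.
rewrite -EU; apply: S2.
- by apply: IH => //; apply: subset_trans sub; apply: subD1set.
- by apply: IH => //; apply: subset_trans sub; apply: subD1set.
- by rewrite ca cb.
- rewrite EI cab ca; lia.
Qed.

Theorem mainTheorem8 (T : finType) (F1 F2 : {set {set T}}) :
  0 < #|T| -> S_pair F1 F2 ->
  forall s s' : T,
    ([set~ s] \in F2 \/ (forall t : T, t != s -> [set t] \in F2)) ->
    ([set~ s'] \in F2 \/ (forall t : T, t != s' -> [set t] \in F2)) ->
    s = s'.
Proof.
move=> n0 [_ [_ S2] [_ [_ S3T]] _] s s' Hs Hs'.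
apply/eqP; apply/negPn/negP => ne.
have cC (u : T) : #|[set~ u]| = #|T| - 1 by rewrite cardsC1 subn1.
have n2 : 1 < #|T|.
  have := cardsD1 s' [set~ s]; rewrite cC !inE eq_sym ne /=.
  have := cardsD1 s [set: T]; rewrite cardsT inE.
  move=> h1 h2; have : 0 < #|[set~ s]| by apply/card_gt0P; exists s'; rewrite !inE eq_sym.
  rewrite cC; lia.
have key (u : T) : ([set~ u] \in F2 \/ (forall t : T, t != u -> [set t] \in F2)) -> [set~ u] \in F2.
  case=> // H; apply: (@grow _ _ [set~ u] S2 _ (#|T| - 2)) => //.
    by move=> t; rewrite !inE => /H.
  rewrite cC; lia.
have A := key _ Hs; have B := key _ Hs'.
have EU : [set~ s] :|: [set~ s'] = [set: T].
  apply/setP=> x; rewrite !inE; case: (eqVneq x s) => [->|] //=.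
have EI : [set~ s] :&: [set~ s'] = [set~ s] :\ s'.
  by apply/setP=> x; rewrite !inE andbC.
have cI : #|[set~ s] :\ s'| = #|T| - 2.
  have := cardsD1 s' [set~ s]; rewrite cC !inE eq_sym ne /=; lia.
move: S3T; rewrite -EU; move/negP; apply; apply: S2 => //.
  by rewrite !cC.
by rewrite EI cI cC; lia.
Qed.
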